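(* Let $(M,g)$ be an $n$-dimensional semi-Riemannian manifold with Weyl tensor $C^{ab}{}_{cd}$, and let $N=n(n-1)/2$. Suppose the characteristic coefficient $c_N$ is nonzero (equivalently $\det(\mathbf{C})\neq 0$). Then, for a given tensor $H^{ab}{}_c$, the inhomogeneous algebraic equation for the vector $V^d$ $$C^{ab}{}_{cd}V^{d}=H^{ab}{}_{c}$$ has a unique solution, given by $$V^a=\frac{2}{(n-1)c_N}\,H^{ij}{}_b\Bigl(c_0\,\overset{N-1}{C}{}^{ab}{}_{ij}+c_2\,\overset{N-3}{C}{}^{ab}{}_{ij}+c_3\,\overset{N-4}{C}{}^{ab}{}_{ij}+\cdots+c_{N-2}\,C^{ab}{}_{ij}\Bigr),$$ i.e. the sum runs over $k=0,2,3,\dots,N-2$ of $c_k\,\overset{N-1-k}{C}{}^{ab}{}_{ij}$.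
   Context: For $p\ge 1$ the Weyl chain of $p$ Weyl tensors is $\overset{p}{C}{}^{ab}{}_{cd}=C^{ab}{}_{i_1j_1}C^{i_1j_1}{}_{i_2j_2}\cdots C^{i_{p-1}j_{p-1}}{}_{cd}$ (so $\overset{1}{C}{}^{ab}{}_{cd}=C^{ab}{}_{cd}$), and $\overset{p}{C}=\overset{p}{C}{}^{ab}{}_{ab}$ denotes its full trace. Writing $A=[ab]$, $C=[cd]$ with $A,C=1,\dots,N$, the Weyl tensor defines a trace-free $N\times N$ matrix $\mathbf{C}$ with $\mathbf{C}^p\leftrightarrow \overset{p}{C}{}^{ab}{}_{cd}$ and $\mathrm{tr}(\mathbf{C}^p)=\overset{p}{C}$. The characteristic coefficients are those of the Cayley–Hamilton theorem $\sum_{k=0}^N c_k\mathbf{C}^{N-k}=0$: $c_0=1$, $c_1=0$, and $c_k=-\frac1k\sum_{i=1}^{k}c_{k-i}\overset{i}{C}$ (e.g. $c_2=-\tfrac12\overset{2}{C}$, $c_3=-\tfrac13\overset{3}{C}$, $c_4=-\tfrac14(\overset{4}{C}-\tfrac12(\overset{2}{C})^2)$); in particular $(-1)^N\det(\mathbf{C})=c_N$.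
   Formalization: The equation is assumed to have at least one solution for the given H, and then a vector V solves it exactly when V equals the displayed formula; existence for arbitrary H is not claimed. Each condition added here is assumed in the paper as well or is needed for the statement above to hold. *)

(* Defs.v *)
(* Pointwise (algebraic) formalization: components in a frame
   of the tangent space at a point, indices in 'I_n. *)
From HB Require Import structures.
From mathcomp Require Import all_boot all_order all_algebra.
Set Implicit Arguments. Unset Strict Implicit. Unset Printing Implicit Defensive.
Import Order.TTheory GRing.Theory Num.Theory.
Local Open Scope ring_scope.

Section Weyl.
Variables (R : realFieldType) (n : nat).

(* A (2,2)-tensor T^{ab}_{cd} is represented by  T a b c d. *)
Definition tensor22 := 'I_n -> 'I_n -> 'I_n -> 'I_n -> R.

Definition lower (g : 'M[R]_n) (C : tensor22) a b c d :=
  \sum_(e < n) \sum_(f < n) g a e * g b f * C e f c d.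

Definition is_weyl (g : 'M[R]_n) (C : tensor22) : Prop :=
  [/\ (forall a b c d, C a b c d = - C b a c d),
      (forall a b c d, C a b c d = - C a b d c),
      (forall a b c d, lower g C a b c d = lower g C c d a b),
      (forall a b c d, lower g C a b c d + lower g C a c d b
                        + lower g C a d b c = 0) &
      (forall b d, \sum_(a < n) C a b a d = 0)].

(* Weyl chain  C^p^{ab}_{cd}  for p >= 1 (wchain C 0 is junk, equal to C). *)
Fixpoint wchain (C : tensor22) (p : nat) : tensor22 :=
  match p with
  | 0 | 1 => C
  | p'.+1 => fun a b c d =>
      \sum_(i < n) \sum_(j < n) wchain C p' a b i j * C i j c d
  end.

Definition wtrace (C : tensor22) (p : nat) : R :=
  \sum_(a < n) \sum_(b < n) wchain C p a b a b.

Fixpoint charcoefs (C : tensor22) (k : nat) : seq R :=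
  match k with
  | 0 => [:: 1]
  | k'.+1 =>
      let s := charcoefs C k' in
      rcons s (- (k'.+1%:R)^-1 *
               \sum_(1 <= i < k'.+2) nth 0 s (k'.+1 - i) * wtrace C i)
  end.

Definition charcoef (C : tensor22) (k : nat) : R := nth 0 (charcoefs C k) k.

Definition Nbiv : nat := (n * (n - 1)) %/ 2.

Definition solves (C : tensor22) (H : 'I_n -> 'I_n -> 'I_n -> R)
    (V : 'I_n -> R) : Prop :=
  forall a b c, \sum_(d < n) C a b c d * V d = H a b c.

Definition weyl_solution (C : tensor22) (H : 'I_n -> 'I_n -> 'I_n -> R)
    (a : 'I_n) : R :=
  2 / ((n%:R - 1) * charcoef C Nbiv) *
  \sum_(i < n) \sum_(j < n) \sum_(b < n)
     H i j b * (\sum_(0 <= k < Nbiv.-1 | k != 1%N)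
                  charcoef C k * wchain C (Nbiv - 1 - k) a b i j).

End Weyl.

(* Main.v *)
Require Import Defs.
From HB Require Import structures.
From mathcomp Require Import all_boot all_order all_algebra.
From mathcomp Require Import zify ring.
Import Order.TTheory GRing.Theory Num.Theory.
Local Open Scope ring_scope.

Module Aux.
Set Implicit Arguments. Unset Strict Implicit. Unset Printing Implicit Defensive.

Section Newton.
Variable F : fieldType.

Lemma deriv_prod_seq (I : eqType) (r : seq I) (f : I -> {poly F}) : uniq r ->
  (\prod_(i <- r) f i)^`() =
  \sum_(k <- r) \prod_(i <- r) (if i == k then (f i)^`() else f i).
Proof.
elim: r => [|x r IH] /=; first by rewrite !big_nil -polyC1 derivC.
move=> /andP [xr ur]; rewrite !big_cons derivM IH // eqxx big_distrr /=.
congr (_ * _ + _).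
  apply: eq_big_seq => i ir; case: eqP => // ix; by rewrite -ix ir in xr.
apply: eq_big_seq => k kr.
have xk : x != k by apply: contraNneq xr => ->.
by rewrite big_cons (negPf xk).
Qed.

Lemma deriv_det (d : nat) (X : 'M[{poly F}]_d) :
  (\det X)^`() = \sum_(k < d)
     \det (\matrix_(i, j) if i == k then (X i j)^`() else X i j).
Proof.
rewrite /determinant raddf_sum /= exchange_big /=; apply: eq_bigr => s _.
rewrite -big_distrr /= derivM.
have -> : ((-1) ^+ (perm.odd_perm s) : {poly F})^`() = 0.
  by case: (perm.odd_perm s); rewrite ?expr0 ?expr1 -?polyC1 ?derivN derivC ?oppr0.
rewrite mul0r add0r deriv_prod_seq ?index_enum_uniq //; congr (_ * _).
by apply: eq_bigr => k _; apply: eq_bigr => i _; rewrite mxE.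
Qed.

Lemma deriv_char_poly (d : nat) (A : 'M[F]_d) :
  (char_poly A)^`() = \sum_(k < d) (\adj (char_poly_mx A)) k k.
Proof.
rewrite /char_poly deriv_det; apply: eq_bigr => k _.
rewrite (expand_det_row _ k) (bigD1 k) //= big1 ?addr0.
  rewrite !mxE eqxx /= mulr1n derivB derivX derivC subr0 mul1r /cofactor.
  congr (_ * _); congr (\det _); apply/matrixP => i j.
  by rewrite !mxE eq_sym (negbTE (neq_lift _ _)).
move=> j kj; rewrite !mxE eqxx eq_sym (negbTE kj) mulr0n sub0r derivN derivC oppr0.
by rewrite mul0r.
Qed.

End Newton.

Section CH.
Variables (F : fieldType) (d : nat) (A : 'M[F]_d).
Definition Bc j : 'M[F]_d := \matrix_(i, k) ((\adj (char_poly_mx A)) i k)`_j.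

Lemma cpmxE i l : char_poly_mx A i l = 'X *+ (i == l) - (A i l)%:P.
Proof. by rewrite !mxE. Qed.

Lemma E1 j : (if j is j'.+1 then Bc j' else 0) - A *m Bc j
   = ((char_poly A)`_j)%:M.
Proof.
apply/matrixP => i k.
have := congr1 (fun M : 'M[{poly F}]_d => (M i k)`_j) (mul_mx_adj (char_poly_mx A)).
rewrite /= !mxE coefMn => <-.
set P := fun l => (\adj (char_poly_mx A)) l k.
rewrite (eq_bigr (fun l => ('X * P l) *+ (i == l) - (A i l)%:P * P l)); last first.
  by move=> l _; rewrite cpmxE mulrBl mulrnAl.
rewrite sumrB.
have -> : \sum_(l < d) 'X * P l *+ (i == l) = 'X * P i.
  rewrite (bigD1 i) //= eqxx mulr1n big1 ?addr0 // => l /negPf il.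
  by rewrite eq_sym il mulr0n.
rewrite coefB.
rewrite coefXM coef_sum; congr (_ - _).
  by case: j => [|j] //=; rewrite mxE.
by apply: eq_bigr => l _; rewrite mul_polyC coefZ mxE.
Qed.
Lemma q_big i : (d < i)%N -> (char_poly A)`_i = 0.
Proof. by move=> di; rewrite nth_default // size_char_poly. Qed.

Lemma q_top : (char_poly A)`_d = 1.
Proof.
have := char_poly_monic A; rewrite monicE lead_coefE size_char_poly /=.
by move/eqP.
Qed.

Definition S j : 'M[F]_d := \sum_(i < d.+1) (char_poly A)`_(j.+1 + i) *: A ^+ i.

Lemma S_rec j : S j - A *m S j.+1 = ((char_poly A)`_j.+1)%:M.
Proof.
rewrite /S big_ord_recl [in X in _ - _ *m X]big_ord_recr /= mulmxE mulrDr mulr_sumr.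
rewrite (@q_big (j.+2 + d)) ?scale0r ?mulr0 ?addr0; last by lia.
have -> : \sum_(i < d) A * ((char_poly A)`_(j.+2 + i) *: A ^+ i) =
    \sum_(i < d) (char_poly A)`_(j.+1 + bump 0 i) *: A ^+ bump 0 i.
  by apply: eq_bigr => i _; rewrite -mulmxE -scalemxAr mulmxE -exprS /bump leq0n add1n addnS addSn.
rewrite -addrA subrr addr0 addn0 expr0.
by apply/matrixP => a b; rewrite !mxE mulr_natr.
Qed.


Definition Jb := (\max_(ik : 'I_d * 'I_d) size ((\adj (char_poly_mx A)) ik.1 ik.2) + d)%N.

Lemma Bc_big j : (Jb <= j)%N -> Bc j = 0.
Proof.
move=> Jj; apply/matrixP => i k; rewrite !mxE nth_default //.
apply: leq_trans Jj; apply: leq_trans (leq_addr _ _).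
have h := @leq_bigmax _ (fun ik : 'I_d * 'I_d => size ((\adj (char_poly_mx A)) ik.1 ik.2)) (i, k).
by rewrite /= mxE in h.
Qed.

Lemma S_big j : (d <= j)%N -> S j = 0.
Proof. by move=> dj; rewrite /S big1 // => i _; rewrite q_big ?scale0r //; lia. Qed.

Lemma Bc_S j : Bc j = S j.
Proof.
have DA : forall j, Bc j - S j = A *m (Bc j.+1 - S j.+1).
  move=> i; have h1 := E1 i.+1; have h2 := S_rec i; rewrite /= in h1.
  rewrite mulmxBr -[Bc i](subrK (A *m Bc i.+1)) -[S i](subrK (A *m S i.+1)) h1 h2.
  by rewrite opprD addrACA subrr add0r.
suff H : forall k j, (Jb <= j + k)%N -> Bc j - S j = 0.
  by apply/eqP; rewrite -subr_eq0; apply/eqP; apply: (H Jb); lia.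
elim=> [|k IH] i hi.
  rewrite addn0 in hi; rewrite Bc_big // S_big ?subrr //; move: hi; rewrite /Jb; lia.
by rewrite DA IH ?mulmx0 //; lia.
Qed.

Lemma CH_q : \sum_(i < d.+1) (char_poly A)`_i *: A ^+ i = 0.
Proof.
have h := E1 0; rewrite /= sub0r Bc_S in h.
have e : \sum_(i < d) (char_poly A)`_(bump 0 i) *: A ^+ (bump 0 i) = A *m S 0.
  rewrite /S big_ord_recr /= (@q_big (1 + d)) ?scale0r ?addr0; last by lia.
  rewrite mulmxE mulr_sumr; apply: eq_bigr => i _.
  by rewrite -mulmxE -scalemxAr mulmxE -exprS /bump leq0n add1n.
rewrite big_ord_recl e -[A *m S 0]opprK h expr0.
have -> : (char_poly A)`_0 *: (1 : 'M[F]_d) = ((char_poly A)`_0)%:M.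
  by apply/matrixP => a b; rewrite !mxE mulr_natr.
by rewrite subrr.
Qed.


Lemma newton_q m : (char_poly A)`_m *+ m =
  \sum_(i < d.+1) (char_poly A)`_(m + i) * \tr (A ^+ i).
Proof.
case: m => [|j].
  have h := congr1 (@mxtrace _ _) CH_q; rewrite mxtrace0 raddf_sum /= in h.
  rewrite mulr0n; symmetry; rewrite -[in RHS]h.
  by apply: eq_bigr => i _; rewrite mxtraceZ add0n.
have e1 : \tr (Bc j) = (char_poly A)`_j.+1 *+ j.+1.
  rewrite -coef_deriv deriv_char_poly coef_sum /mxtrace.
  by apply: eq_bigr => k _; rewrite mxE.
rewrite -e1 Bc_S /S raddf_sum /=.
by apply: eq_bigr => i _; rewrite mxtraceZ addSn.
Qed.

End CH.

Section P3.
Variables (R : numFieldType) (d : nat) (A : 'M[R]_d).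
Let newton_q := newton_q A.
Let q_big := @q_big R d A.
Let q_top := q_top A.

Lemma coef_match (c : nat -> R) :
  c 0%N = 1 ->
  (forall k, c k.+1 = - (k.+1%:R)^-1 *
      \sum_(1 <= i < k.+2) c (k.+1 - i)%N * \tr (A ^+ i)) ->
  forall k, (k <= d)%N -> c k = (char_poly A)`_(d - k).
Proof.
move=> c0 crec.
suff H : forall k, (k <= d)%N -> forall j, (j <= k)%N -> c j = (char_poly A)`_(d - j).
  by move=> k kd; apply: (H k kd).
elim=> [|k IH] kd j jk.
  by move: jk; rewrite leqn0 => /eqP ->; rewrite c0 subn0 q_top.
case: (leqP j k) => [jk'|kj]; first by apply: IH => //; lia.
have -> : j = k.+1 by lia.
set m := (d - k.+1)%N.
rewrite crec.
rewrite (eq_big_nat _ _ (F2 := fun i => (char_poly A)`_(m + i) * \tr (A ^+ i))); last first.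
  move=> i /andP [i1 i2]; rewrite IH; [|lia|lia]; congr (_`_ _ * _); rewrite /m; lia.
have hn := newton_q m.
rewrite -(big_mkord xpredT (fun i => (char_poly A)`_(m + i) * \tr (A ^+ i))) in hn.
rewrite big_ltn // addn0 expr0 mxtrace1 (big_cat_nat _ (n := k.+2)) /= in hn; [|lia|lia].
have z : \sum_(k.+2 <= i < d.+1) (char_poly A)`_(m + i) * \tr (A ^+ i) = 0.
  rewrite big_nat_cond big1 // => i /andP [/andP [i1 i2] _].
  by rewrite q_big ?mul0r //; rewrite /m; lia.
rewrite z addr0 in hn.
have -> : \sum_(1 <= i < k.+2) (char_poly A)`_(m + i) * \tr (A ^+ i) =
     (char_poly A)`_m *+ m - (char_poly A)`_m * d%:R by rewrite hn addrC addKr.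
have hmd : (m%:R - d%:R : R) = - (k.+1)%:R.
  by rewrite -[in X in _ - X = _](subnK kd) natrD opprD addrA subrr add0r.
have k0 : (k.+1%:R : R) != 0 by rewrite pnatr_eq0.
by rewrite -[_ *+ m]mulr_natr -mulrBr hmd mulrN mulNr mulrN opprK mulrCA mulVf // mulr1.
Qed.
Lemma CH_c (c : nat -> R) :
  c 0%N = 1 ->
  (forall k, c k.+1 = - (k.+1%:R)^-1 *
      \sum_(1 <= i < k.+2) c (k.+1 - i)%N * \tr (A ^+ i)) ->
  \sum_(k < d.+1) c k *: A ^+ (d - k) = 0.
Proof.
move=> c0 crec; rewrite -[RHS](CH_q A) (reindex_inj rev_ord_inj) /=.
apply: eq_bigr => k _; have kd : (k <= d)%N by rewrite -ltnS ltn_ord.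
by rewrite subSS (coef_match c0 crec) ?subKn // leq_subr.
Qed.

End P3.

Section T.
Variables (R : realFieldType) (n : nat) (C : tensor22 R n).
Hypothesis a1 : forall a b c d, C a b c d = - C b a c d.
Hypothesis a2 : forall a b c d, C a b c d = - C a b d c.

Lemma xeqN0 (x : R) : x = - x -> x = 0.
Proof.
move/eqP; rewrite -addr_eq0 -mulr2n mulrn_eq0 /= => /eqP //.
Qed.

Lemma wchainS p : wchain C p.+2 = fun a b c d =>
  \sum_(i < n) \sum_(j < n) wchain C p.+1 a b i j * C i j c d.
Proof. by []. Qed.

Lemma wa1 p a b c d : wchain C p a b c d = - wchain C p b a c d.
Proof.
elim: p a b c d => [|[|p] IH] a b c d; try exact: a1.
rewrite wchainS -sumrN; apply: eq_bigr => i _; rewrite -sumrN.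
by apply: eq_bigr => j _; rewrite IH mulNr.
Qed.

Lemma wa2 p a b c d : wchain C p a b c d = - wchain C p a b d c.
Proof.
case: p => [|[|p]]; try exact: a2.
rewrite wchainS -sumrN; apply: eq_bigr => i _; rewrite -sumrN.
by apply: eq_bigr => j _; rewrite a2 mulrN.
Qed.

Definition Apr := [pred p : 'I_n * 'I_n | (p.1 < p.2)%N].
Definition dd := #|Apr|.
Definition pr (P : 'I_dd) : 'I_n * 'I_n := enum_val P.

Lemma sum_pairs (f : 'I_n -> 'I_n -> R) :
  (forall a b, f a b = f b a) -> (forall a, f a a = 0) ->
  \sum_(a < n) \sum_(b < n) f a b = 2 * \sum_(P < dd) f (pr P).1 (pr P).2.
Proof.
move=> fs f0.
have e1 : \sum_(a < n) \sum_(b < n) f a b =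
   \sum_(a < n) \sum_(b < n) (if (a < b)%N then f a b else 0) +
   \sum_(a < n) \sum_(b < n) (if (b < a)%N then f a b else 0).
  rewrite -big_split /=; apply: eq_bigr => a _; rewrite -big_split /=.
  apply: eq_bigr => b _; case: ltngtP => h; rewrite ?addr0 ?add0r //.
  by have -> : a = b by apply: val_inj. 
have e2 : \sum_(a < n) \sum_(b < n) (if (b < a)%N then f a b else 0) =
   \sum_(a < n) \sum_(b < n) (if (a < b)%N then f a b else 0).
  rewrite exchange_big /=; apply: eq_bigr => a _; apply: eq_bigr => b _.
  by rewrite fs.
have e3 : \sum_(a < n) \sum_(b < n) (if (a < b)%N then f a b else 0) =
   \sum_(P < dd) f (pr P).1 (pr P).2.
  rewrite /dd /pr -(big_enum_val (A := Apr) (fun p : 'I_n * 'I_n => f p.1 p.2)) /=.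
  rewrite pair_big /= [RHS]big_mkcond /=; apply: eq_bigr => -[a b] _.
  by rewrite !inE.
by rewrite e1 e2 e3 mulr2n mulrDl mul1r.
Qed.


Definition KK : 'M[R]_dd := \matrix_(P, Q) (2 * C (pr P).1 (pr P).2 (pr Q).1 (pr Q).2).

Lemma wchainK p : (0 < p)%N -> forall P Q,
  wchain C p (pr P).1 (pr P).2 (pr Q).1 (pr Q).2 = (KK ^+ p) P Q / 2.
Proof.
elim: p => [//|[|p] IH] _ P Q.
  by rewrite expr1 mxE /=; field.
rewrite wchainS /=.
rewrite (@sum_pairs (fun i j => wchain C p.+1 (pr P).1 (pr P).2 i j * C i j (pr Q).1 (pr Q).2)); last 2 first.
- by move=> i j; rewrite [wchain _ _ _ _ j i]wa2 [C j i _ _]a1 mulrNN.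
- by move=> i; rewrite (@xeqN0 (wchain C p.+1 (pr P).1 (pr P).2 i i)) ?mul0r // -wa2.
rewrite exprSr -mulmxE mxE mulr_sumr [RHS]mulr_suml; apply: eq_bigr => T _.
by rewrite IH // mxE; field.
Qed.

Lemma wtraceK p : (0 < p)%N -> wtrace C p = \tr (KK ^+ p).
Proof.
move=> p0; rewrite /wtrace (@sum_pairs (fun a b => wchain C p a b a b)); last 2 first.
- by move=> a b; rewrite wa1 wa2 opprK.
- by move=> a; rewrite (@xeqN0 (wchain C p a a a a)) // -wa1.
rewrite /mxtrace mulr_sumr; apply: eq_bigr => P _; rewrite wchainK //; by field.
Qed.

Lemma card_Apr : (2 * dd)%N = (n * (n - 1))%N.
Proof.
apply/eqP; rewrite -(eqr_nat R) natrM.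
have fs : forall a b : 'I_n, ((a != b)%:R : R) = (b != a)%:R.
  by move=> a b; rewrite eq_sym.
have f0 : forall a : 'I_n, ((a != a)%:R : R) = 0 by move=> a; rewrite eqxx.
have h := @sum_pairs (fun a b => ((a != b)%:R : R)) fs f0.
have e1 : forall a : 'I_n, \sum_(b < n) ((a != b)%:R : R) = (n - 1)%:R.
  move=> a; rewrite (bigD1 a) //= eqxx add0r.
  rewrite (eq_bigr (fun _ => 1)); last by move=> b ba; rewrite eq_sym ba.
  by rewrite sumr_const cardC1 card_ord subn1.
have e2 : \sum_(P < dd) (((pr P).1 != (pr P).2)%:R : R) = dd%:R.
  rewrite (eq_bigr (fun _ => 1)); first by rewrite sumr_const card_ord.
  move=> P _; have := enum_valP P; rewrite inE /pr => hP.
  by rewrite neq_ltn hP.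
rewrite (eq_bigr (fun _ => (n - 1)%:R)) in h; last by move=> a _; apply: e1.
rewrite e2 sumr_const card_ord in h.
by rewrite -h natrM mulrC mulr_natr.
Qed.

Lemma anti_ext (E : 'I_n -> 'I_n -> 'I_n -> 'I_n -> R) :
  (forall a b c d, E a b c d = - E b a c d) ->
  (forall a b c d, E a b c d = - E a b d c) ->
  (forall a b c d : 'I_n, (a < b)%N -> (c < d)%N -> E a b c d = 0) ->
  forall a b c d, E a b c d = 0.
Proof.
move=> e1 e2 e0.
have h : forall a b c d : 'I_n, (a < b)%N -> E a b c d = 0.
  move=> a b c d ab; case: (ltngtP c d) => cd; first exact: e0.
    by rewrite e2 e0 ?oppr0.
  have -> : d = c by apply: val_inj.
  by apply: xeqN0; rewrite -e2.
move=> a b c d; case: (ltngtP a b) => ab; first exact: h.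
  by rewrite e1 h ?oppr0.
have -> : b = a by apply: val_inj.
by apply: xeqN0; rewrite -e1.
Qed.

Definition Id (a b c d : 'I_n) : R :=
  (((a == c) && (b == d))%:R - ((a == d) && (b == c))%:R) / 2.

Lemma prK (a b : 'I_n) (ab : (a < b)%N) :
  exists P, pr P = (a, b).
Proof.
have pa : (a, b) \in Apr by rewrite inE.
by exists (enum_rank_in pa (a, b)); rewrite /pr enum_rankK_in.
Qed.

Lemma tensorCH (c : nat -> R) : (0 < dd)%N ->
  \sum_(k < dd.+1) c k *: KK ^+ (dd - k) = 0 ->
  forall a b e f, \sum_(k < dd) c k * wchain C (dd - k) a b e f + c dd * Id a b e f = 0.
Proof.
move=> d0 hCH; apply: anti_ext.
- move=> a b e f; rewrite opprD -sumrN; congr (_ + _).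
    by apply: eq_bigr => k _; rewrite wa1 mulrN.
  by rewrite /Id -mulrN -mulNr opprB [(b == e) && _]andbC [(b == f) && _]andbC.
- move=> a b e f; rewrite opprD -sumrN; congr (_ + _).
    by apply: eq_bigr => k _; rewrite wa2 mulrN.
  by rewrite /Id -mulrN -mulNr opprB.
move=> a b e f ab ef.
have [P hP] := prK ab; have [Q hQ] := prK ef.
have := congr1 (fun M : 'M[R]_dd => M P Q) hCH.
rewrite /= summxE big_ord_recr /= subnn expr0 !mxE => h.
have -> : a = (pr P).1 by rewrite hP.
have -> : b = (pr P).2 by rewrite hP.
have -> : e = (pr Q).1 by rewrite hQ.
have -> : f = (pr Q).2 by rewrite hQ.
have hId : Id (pr P).1 (pr P).2 (pr Q).1 (pr Q).2 = (P == Q)%:R / 2.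
  rewrite -(inj_eq enum_val_inj) -/(pr P) -/(pr Q) hP hQ /Id /= xpair_eqE.
  have -> : (a == f) && (b == e) = false.
    apply/negP => /andP [/eqP af /eqP be]; move: ab ef; rewrite af be.
    by move=> h1 h2; have := ltn_trans h1 h2; rewrite ltnn.
  by rewrite subr0.
have ee : forall i : 'I_dd, (c i *: KK ^+ (dd - i)) P Q =
    2 * (c i * wchain C (dd - i) (pr P).1 (pr P).2 (pr Q).1 (pr Q).2).
  by move=> i; rewrite mxE wchainK ?subn_gt0 //; field.
rewrite (eq_bigr _ (fun i _ => ee i)) -mulr_sumr in h.
rewrite hId; apply: (@mulfI _ 2); first by rewrite pnatr_eq0.
by rewrite mulr0 -[RHS]h; field.
Qed.
End T.

Section CC.
Variables (R : realFieldType) (n : nat) (C : tensor22 R n).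

Lemma size_charcoefs k : size (charcoefs C k) = k.+1.
Proof. by elim: k => [|k IH] //=; rewrite size_rcons IH. Qed.

Lemma nth_charcoefs k j : (j <= k)%N -> nth 0 (charcoefs C k) j = charcoef C j.
Proof.
elim: k j => [|k IH] j jk.
  by move: jk; rewrite leqn0 => /eqP ->.
case: (leqP j k) => [jk'|kj].
  by rewrite /= nth_rcons size_charcoefs ltnS jk' IH.
by have -> : j = k.+1 by lia.
Qed.

Lemma charcoef0 : charcoef C 0 = 1.
Proof. by []. Qed.

Lemma charcoefS k : charcoef C k.+1 = - (k.+1%:R)^-1 *
  \sum_(1 <= i < k.+2) charcoef C (k.+1 - i)%N * wtrace C i.
Proof.
rewrite /charcoef /= nth_rcons size_charcoefs ltnn eqxx; congr (_ * _).
apply: eq_big_nat => i /andP [i1 i2]; rewrite nth_charcoefs //; lia.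
Qed.

End CC.

Section Main.
Variables (R : realFieldType) (n : nat) (C : tensor22 R n) (H : 'I_n -> 'I_n -> 'I_n -> R).
Hypothesis a1 : forall a b c d, C a b c d = - C b a c d.
Hypothesis a2 : forall a b c d, C a b c d = - C a b d c.
Hypothesis htr : forall b d, \sum_(a < n) C a b a d = 0.

Lemma pick (G : 'I_n -> R) c : \sum_(e < n) (e == c)%:R * G e = G c.
Proof.
rewrite (bigD1 c) //= eqxx mul1r big1 ?addr0 // => e /negPf ->; by rewrite mul0r.
Qed.

Lemma pick' (G : 'I_n -> R) c : \sum_(e < n) (c == e)%:R * G e = G c.
Proof. by under eq_bigr do rewrite eq_sym; exact: pick. Qed.

Lemma sum_swap4 (F : 'I_n -> 'I_n -> 'I_n -> 'I_n -> R) :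
  \sum_(c < n) \sum_(d < n) \sum_(i < n) \sum_(j < n) F c d i j =
  \sum_(i < n) \sum_(j < n) \sum_(c < n) \sum_(d < n) F c d i j.
Proof.
under eq_bigr => c _ do rewrite exchange_big.
under eq_bigr => c _ do under eq_bigr => i _ do rewrite exchange_big.
rewrite exchange_big.
by under eq_bigr => i _ do rewrite exchange_big.
Qed.

Lemma sum_swap3 (I : finType) (F : I -> 'I_n -> 'I_n -> R) :
  \sum_(c < n) \sum_(d < n) \sum_(k : I) F k c d =
  \sum_(k : I) \sum_(c < n) \sum_(d < n) F k c d.
Proof.
under eq_bigr => c _ do rewrite exchange_big.
by rewrite exchange_big.
Qed.

Lemma idX (Y : 'I_n -> 'I_n -> R) : (forall c d, Y c d = - Y d c) ->
  forall a b, \sum_(c < n) \sum_(d < n) Id R a b c d * Y c d = Y a b.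
Proof.
move=> Ya a b.
have ee : forall c d, Id R a b c d * Y c d =
   ((a == c)%:R * ((b == d)%:R * Y c d) - (b == c)%:R * ((a == d)%:R * Y c d)) / 2.
  move=> c d; rewrite /Id.
  by case: (a == c); case: (b == d); case: (a == d); case: (b == c) => /=; ring.
under eq_bigr do under eq_bigr do rewrite ee.
have -> : \sum_(c < n) \sum_(d < n)
   ((a == c)%:R * ((b == d)%:R * Y c d) - (b == c)%:R * ((a == d)%:R * Y c d)) / 2
  = (\sum_(c < n) (a == c)%:R * \sum_(d < n) ((b == d)%:R * Y c d)
     - \sum_(c < n) (b == c)%:R * \sum_(d < n) ((a == d)%:R * Y c d)) / 2.
  rewrite -sumrB mulr_suml; apply: eq_bigr => c _.
  by rewrite !mulr_sumr -sumrB mulr_suml.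
under eq_bigr => c _ do rewrite (pick' (Y c)).
rewrite (pick' (fun c => Y c b)).
under [X in _ - X]eq_bigr => c _ do rewrite (pick' (Y c)).
by rewrite (pick' (fun c => Y c a)) [Y b a]Ya; field.
Qed.

Definition Xt (V : 'I_n -> R) c d e : R :=
  ((c == e)%:R * V d - (d == e)%:R * V c) / 2.

Lemma S1 V : solves C H V ->
  forall a b e, \sum_(c < n) \sum_(d < n) C a b c d * Xt V c d e = H a b e.
Proof.
move=> hV a b e; rewrite -hV.
have ee : forall c d, C a b c d * Xt V c d e =
   ((c == e)%:R * (C a b c d * V d) + (d == e)%:R * (C a b d c * V c)) / 2.
  by move=> c d; rewrite /Xt [C a b d c]a2; ring.
under eq_bigr do under eq_bigr do rewrite ee.
have -> : \sum_(c < n) \sum_(d < n)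
   ((c == e)%:R * (C a b c d * V d) + (d == e)%:R * (C a b d c * V c)) / 2
  = (\sum_(c < n) (c == e)%:R * \sum_(d < n) (C a b c d * V d)
     + \sum_(c < n) \sum_(d < n) (d == e)%:R * (C a b d c * V c)) / 2.
  rewrite -big_split mulr_suml; apply: eq_bigr => c _.
  by rewrite !mulr_sumr -big_split mulr_suml.
rewrite (pick (fun c => \sum_(d < n) C a b c d * V d)).
under [X in _ + X]eq_bigr => c _ do rewrite (pick (fun d => C a b d c * V c)).
by field.
Qed.

Lemma wX V : solves C H V -> forall m a b e,
  \sum_(c < n) \sum_(d < n) wchain C m.+2 a b c d * Xt V c d e =
  \sum_(i < n) \sum_(j < n) wchain C m.+1 a b i j * H i j e.
Proof.
move=> hV m a b e; rewrite wchainS /=.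
under eq_bigr => c _ do under eq_bigr => d _ do rewrite mulr_suml.
under eq_bigr => c _ do under eq_bigr => d _ do under eq_bigr => i _ do rewrite mulr_suml.
rewrite sum_swap4; apply: eq_bigr => i _; apply: eq_bigr => j _.
rewrite -(S1 hV); rewrite mulr_sumr; apply: eq_bigr => c _.
by rewrite mulr_sumr; apply: eq_bigr => d _; rewrite mulrA.
Qed.

Lemma X1 V : solves C H V -> forall a b e,
  \sum_(c < n) \sum_(d < n) wchain C 1 a b c d * Xt V c d e = H a b e.
Proof. exact: S1. Qed.

Lemma Hdiag V : solves C H V -> forall a, \sum_(e < n) H a e e = 0.
Proof.
move=> hV a; under eq_bigr => e _ do rewrite -hV.
rewrite exchange_big /= big1 // => d _.
under eq_bigr => e _ do rewrite a1 mulNr.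
by rewrite sumrN -mulr_suml htr mul0r oppr0.
Qed.

Lemma Xdiag V a : \sum_(e < n) Xt V a e e = (V a - n%:R * V a) / 2.
Proof.
rewrite /Xt -mulr_suml sumrB (pick' V a).
under eq_bigr do rewrite eqxx mul1r.
by rewrite sumr_const card_ord mulr_natl.
Qed.

Definition G m a b e := \sum_(i < n) \sum_(j < n) wchain C m a b i j * H i j e.

Lemma c1 : charcoef C 1 = 0.
Proof.
rewrite charcoefS big_nat1 /= subnn charcoef0 mul1r.
have -> : wtrace C 1 = 0.
  by rewrite /wtrace exchange_big big1 // => b _; apply: htr.
by rewrite mulr0.
Qed.

Lemma key V : solves C H V -> (2 <= n)%N -> charcoef C (Nbiv n) != 0 ->
  forall a, V a = weyl_solution C H a.
Proof.
move=> hV n2 cN a.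
have hN : Nbiv n = dd n by rewrite /Nbiv -(card_Apr R) mulKn.
have d0 : (0 < dd n)%N by have := card_Apr R n; nia.
have hCH : \sum_(k < (dd n).+1) charcoef C k *: KK C ^+ (dd n - k) = 0.
  apply: CH_c; first by [].
  move=> k; rewrite charcoefS; congr (_ * _); apply: eq_big_nat => i /andP [i1 _].
  by rewrite (wtraceK a1 a2).
have hT := tensorCH a1 a2 d0 hCH.
rewrite /weyl_solution hN; rewrite hN in cN.
move: (dd n) hT cN d0 => N; case: N => [//|N'] hT cN _.
set cc := charcoef C.
have XA : forall e c d, Xt V c d e = - Xt V d c e by move=> e c d; rewrite /Xt; ring.
have hB : forall b e, \sum_(k < N') cc k * G (N' - k) a b e + cc N' * H a b e
     + cc N'.+1 * Xt V a b e = 0.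
  move=> b e.
  have z : \sum_(c < n) \sum_(d < n) (\sum_(k < N'.+1) cc k * wchain C (N'.+1 - k) a b c d
       + cc N'.+1 * Id R a b c d) * Xt V c d e = 0.
    by rewrite big1 // => c _; rewrite big1 // => d _; rewrite hT mul0r.
  rewrite -[RHS]z.
  under [RHS]eq_bigr => c _ do under eq_bigr => d _ do rewrite mulrDl mulr_suml.
  under [RHS]eq_bigr => c _ do rewrite big_split /=.
  rewrite [RHS]big_split /= sum_swap3.
  have E2 : \sum_(c < n) \sum_(d < n) cc N'.+1 * Id R a b c d * Xt V c d e
       = cc N'.+1 * Xt V a b e.
    rewrite -(idX (XA e) a b) mulr_sumr; apply: eq_bigr => c _.
    by rewrite mulr_sumr; apply: eq_bigr => d _; rewrite mulrA.
  rewrite E2 big_ord_recr /= subSn // subnn; congr (_ + _ + _).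
    apply: eq_bigr => k _.
    have [m hm] : exists m, (N' - k = m.+1)%N by exists (N' - k - 1)%N; have := ltn_ord k; lia.
    have -> : (N'.+1 - k = m.+2)%N by have := ltn_ord k; lia.
    rewrite hm /G -(wX hV) mulr_sumr; apply: eq_bigr => c _.
    by rewrite mulr_sumr; apply: eq_bigr => d _; rewrite mulrA.
  rewrite -(X1 hV) mulr_sumr; apply: eq_bigr => c _.
  by rewrite mulr_sumr; apply: eq_bigr => d _; rewrite mulrA.
have hC : \sum_(k < N') cc k * (\sum_(e < n) G (N' - k) a e e)
     + cc N'.+1 * ((V a - n%:R * V a) / 2) = 0.
  have z2 : \sum_(e < n) (\sum_(k < N') cc k * G (N' - k) a e e + cc N' * H a e e
     + cc N'.+1 * Xt V a e e) = 0 by rewrite big1 // => e _; apply: hB.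
  rewrite -[RHS]z2 !big_split /= -!mulr_sumr (Hdiag hV) mulr0 addr0 Xdiag.
  congr (_ + _); rewrite exchange_big /=; apply: eq_bigr => k _.
  by rewrite mulr_sumr.
have Z : \sum_(i < n) \sum_(j < n) \sum_(b < n) H i j b *
     (\sum_(0 <= k < N'.+1.-1 | k != 1%N) cc k * wchain C (N'.+1 - 1 - k) a b i j)
   = \sum_(k < N') cc k * (\sum_(e < n) G (N' - k) a e e).
  have inner : forall b i j,
     \sum_(0 <= k < N'.+1.-1 | k != 1%N) cc k * wchain C (N'.+1 - 1 - k) a b i j
     = \sum_(k < N') cc k * wchain C (N' - k) a b i j.
    move=> b i j; rewrite big_mkcond /= -(big_mkord xpredT (fun k => cc k * wchain C (N' - k) a b i j)); apply: eq_big_nat => k /andP [_ kN].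
    case: eqP => [->|_]; first by rewrite /cc c1 !mul0r.
    by have -> : (N'.+1 - 1 - k = N' - k)%N by lia.
  under eq_bigr => i _ do under eq_bigr => j _ do under eq_bigr => b _ do rewrite inner mulr_sumr.
  under eq_bigr => i _ do under eq_bigr => j _ do rewrite exchange_big.
  under eq_bigr => i _ do rewrite exchange_big.
  rewrite exchange_big; apply: eq_bigr => k _.
  under eq_bigr => i _ do rewrite exchange_big.
  rewrite exchange_big /G mulr_sumr; apply: eq_bigr => b _.
  rewrite mulr_sumr; apply: eq_bigr => i _.
  rewrite mulr_sumr; apply: eq_bigr => j _.
  by rewrite mulrCA [H i j b * _]mulrC.
rewrite Z.
have n1 : (n%:R - 1 : R) != 0.
  rewrite subr_eq0 -[X in _ == X]/(1%:R : R) eqr_nat; lia.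
apply/eqP; rewrite -subr_eq0; apply/eqP.
have -> : \sum_(k < N') cc k * (\sum_(e < n) G (N' - k) a e e) = - (cc N'.+1 * ((V a - n%:R * V a) / 2)).
  by apply/eqP; rewrite -addr_eq0 hC.
by field; rewrite n1 cN.
Qed.

End Main.

End Aux.
Import Aux.

Theorem mainTheorem1 (R : realFieldType) (n : nat) (g : 'M[R]_n)
    (C : tensor22 R n) (H : 'I_n -> 'I_n -> 'I_n -> R) :
  (2 <= n)%N ->
  g^T = g -> \det g != 0 ->
  is_weyl g C ->
  charcoef C (Nbiv n) != 0 ->
  (exists V0 : 'I_n -> R, solves C H V0) ->
  forall V : 'I_n -> R, solves C H V <-> (forall a, V a = weyl_solution C H a).
Proof.
move=> n2 _ _ [a1 a2 _ _ htr] cN [V0 hV0] V; split.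
  by move=> hV a; exact: (key a1 a2 htr hV n2 cN a).
move=> hVe a b c.
rewrite -(hV0 a b c); apply: eq_bigr => d _.
by rewrite hVe (key a1 a2 htr hV0 n2 cN d).
Qed.
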